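(* For every $\alpha,\beta\in\mathcal W(\tau_\lambda;\mathbb Z)$, $Z_\alpha Z_\beta=\omega^{2\Theta(\alpha,\beta)}Z_{\alpha+\beta}$ in $\mathcal Z^\omega(\lambda)$. In particular $Z_\alpha Z_\beta=\omega^{4\Theta(\alpha,\beta)}Z_\beta Z_\alpha$.
   Context: $S$ is a closed oriented surface $\bar S$ of genus $g$ minus $s\ge1$ points, $2-2g-s<0$; $\lambda$ is an ideal triangulation (triangulation of $\bar S$ with vertices exactly the removed points) with edges $\lambda_1,\dots,\lambda_n$. Let $a_{ij}\in\{0,1,2\}$ be the number of times an end of $\lambda_j$ immediately succeeds an end of $\lambda_i$ going counterclockwise around a puncture, $\sigma_{ij}=a_{ij}-a_{ji}$. For $\omega\in\mathbb C-\{0\}$, $\mathcal T^\omega(\lambda)$ is generated by $Z_i^{\pm1}$ with relations $Z_iZ_j=\omega^{2\sigma_{ij}}Z_jZ_i$; Weyl ordering $[Z_{i_1}^{n_1}\cdots Z_{i_l}^{n_l}]=\omega^{-\sum_{u<v}n_un_v\sigma_{i_ui_v}}Z_{i_1}^{n_1}\cdots Z_{i_l}^{n_l}$. $\mathcal Z^\omega(\lambda)$ is the subalgebra generated by monomials $Z_1^{k_1}\cdots Z_n^{k_n}$ such that $k_{i_1}+k_{i_2}+k_{i_3}$ is even for the sides $\lambda_{i_1},\lambda_{i_2},\lambda_{i_3}$ of every face. $\tau_\lambda$ is the train track which in each face of $\lambda$ consists of three arcs each joining two sides and turning around the corner between them, with one switch on each edge $\lambda_i$. $\mathcal W(\tau_\lambda;\mathbb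 Z)$ is the group of integer edge weights on $\tau_\lambda$ satisfying the switch conditions; $\alpha_i$ is the total weight on one side of the switch on $\lambda_i$, and $Z_\alpha=[Z_1^{\alpha_1}\cdots Z_n^{\alpha_n}]$. Thurston intersection form: $\Theta(\alpha,\beta)=\frac12\sum_{(e,e')}\bigl(\alpha(e)\beta(e')-\alpha(e')\beta(e)\bigr)$, the sum over all pairs $(e,e')$ of (germs of) edges of $\tau_\lambda$ emerging on the same side of a switch with $e$ to the right of $e'$ (not necessarily adjacent); $\Theta(\alpha,\beta)$ is an integer. *)

(* Defs.v *)
From HB Require Import structures.
From mathcomp Require Import all_boot all_order all_algebra.
From mathcomp Require Import complex.
From mathcomp Require Import reals.
Set Implicit Arguments. Unset Strict Implicit. Unset Printing Implicit Defensive.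
Import Order.TTheory GRing.Theory Num.Theory.
Local Open Scope ring_scope.

(* [n] edges lambda_0 .. lambda_{n-1}, a finite type [F] of faces, and       *)
(* [side f k] (k : 'I_3) = the label of the k-th side of the face f, the     *)
(* sides s_0, s_1, s_2 being listed in COUNTERCLOCKWISE order along the      *)
(* boundary of the face (for the orientation of S).  Corner [k] of [f] is    *)
(* the corner between sides k and k+1 (indices mod 3, via [ordS]).           *)
(* Gluing is forced: each edge label occurs on exactly two face-sides, which *)
(* are identified by the (orientation reversing) gluing.                     *)

Definition face_side (F : finType) := (F * 'I_3)%type.

Definition face_adj (n : nat) (F : finType) (side : F -> 'I_3 -> 'I_n) : rel F :=
  fun f g => [exists k : 'I_3, exists l : 'I_3, side f k == side g l].

Definition ideal_triangulation (n : nat) (F : finType)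
    (side : F -> 'I_3 -> 'I_n) : Prop :=
  [/\
      forall i : 'I_n, #|[set p : face_side F | side p.1 p.2 == i]| = 2%N,
      forall f g : F, connect (face_adj side) f g
    & (* S is not empty of faces (equivalently 2 - 2g - s < 0) *)
      (0 < #|F|)%N].

(* a_{ij}: number of times an end of lambda_j immediately succeeds an end of *)
(* lambda_i going counterclockwise around a puncture.  At corner k of a face *)
(* (between s_k and s_{k+1}), going counterclockwise around the vertex, the  *)
(* end of s_k immediately succeeds the end of s_{k+1}.                       *)
Definition a_coef (n : nat) (F : finType) (side : F -> 'I_3 -> 'I_n)
    (i j : 'I_n) : nat :=
  #|[set p : face_side F | (side p.1 (ordS p.2) == i) && (side p.1 p.2 == j)]|.

Definition sigma (n : nat) (F : finType) (side : F -> 'I_3 -> 'I_n)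
    (i j : 'I_n) : int :=
  (a_coef side i j)%:Z - (a_coef side j i)%:Z.

(* The train track tau_lambda: in face f, the edge (arc) number k turns      *)
(* around corner k, joining the switches on sides k and k+1.  An integer     *)
(* edge weight is a function w : F -> 'I_3 -> int.                           *)
(* On the side of the switch of lambda_i facing f (where side f k = i), the  *)
(* emerging germs are those of arcs k-1 and k; their total weight is         *)
(* [side_weight w f k].                                                      *)

Definition side_weight (F : finType) (w : F -> 'I_3 -> int) (f : F) (k : 'I_3)
  : int := w f k + w f (ord_pred k).

Definition is_edge_weight (n : nat) (F : finType) (side : F -> 'I_3 -> 'I_n)
    (w : F -> 'I_3 -> int) : Prop :=
  forall (f g : F) (k l : 'I_3), side f k = side g l ->
    side_weight w f k = side_weight w g l.

Definition add_weight (F : finType) (w w' : F -> 'I_3 -> int) :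
  F -> 'I_3 -> int := fun f k => w f k + w' f k.

Definition edge_coord (n : nat) (F : finType) (side : F -> 'I_3 -> 'I_n)
    (w : F -> 'I_3 -> int) (i : 'I_n) : int :=
  if [pick p : face_side F | side p.1 p.2 == i] is Some p
  then side_weight w p.1 p.2 else 0.

(* Thurston form.  Standing at the switch on side k of f and looking into f, *)
(* the germ of arc k (towards corner k, at the end of s_k) is to the right   *)
(* of the germ of arc k-1.  [thurston2] is the sum over all pairs, i.e.      *)
(* 2 * Theta; Theta is its half (an integer, as stated in the paper).        *)
Definition thurston2 (F : finType) (a b : F -> 'I_3 -> int) : int :=
  \sum_(p : face_side F)
     (a p.1 p.2 * b p.1 (ord_pred p.2) - a p.1 (ord_pred p.2) * b p.1 p.2).

Definition thurston (F : finType) (a b : F -> 'I_3 -> int) : int :=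
  (thurston2 a b %/ 2)%Z.

(* [weyl] k = [Z_0^{k_0} ... Z_{n-1}^{k_{n-1}}]                              *)

Definition quantum_torus_rel (n : nat) (F : finType) (side : F -> 'I_3 -> 'I_n)
    (R : realType) (omega : R[i]) (A : unitAlgType R[i]) (Z : 'I_n -> A) : Prop :=
  (forall i, Z i \is a GRing.unit) /\
  (forall i j, Z i * Z j = omega ^ (2 * sigma side i j) *: (Z j * Z i)).

Definition weyl (n : nat) (F : finType) (side : F -> 'I_3 -> 'I_n)
    (R : realType) (omega : R[i]) (A : unitAlgType R[i]) (Z : 'I_n -> A)
    (k : 'I_n -> int) : A :=
  omega ^ (- \sum_(u < n) \sum_(v < n | (u < v)%N) k u * k v * sigma side u v)
  *: \prod_(i < n) Z i ^ k i.

Definition Zw (n : nat) (F : finType) (side : F -> 'I_3 -> 'I_n)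
    (R : realType) (omega : R[i]) (A : unitAlgType R[i]) (Z : 'I_n -> A)
    (w : F -> 'I_3 -> int) : A :=
  weyl side omega Z (edge_coord side w).

(* Main.v *)
Require Import Defs.
From HB Require Import structures.
From mathcomp Require Import all_boot all_order all_algebra.
From mathcomp Require Import complex.
From mathcomp Require Import reals.
From mathcomp Require Import zify ring.
Import GRing.Theory Num.Theory.
Local Open Scope ring_scope.
Set Implicit Arguments. Unset Strict Implicit.
Definition qc (K : fieldType) (A : unitAlgType K) (x y : A) (e : K) :=
  x * y = e *: (y * x).

Lemma qc_mulr (K : fieldType) (A : unitAlgType K) (x y y' : A) (e e' : K) :
  qc x y e -> qc x y' e' -> qc x (y * y') (e * e').
Proof.
rewrite /qc => H H'.
by rewrite mulrA H -scalerAl -[y * x * y']mulrA H' -scalerAr scalerA mulrA.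
Qed.

Lemma qc_sym (K : fieldType) (A : unitAlgType K) (x y : A) (e : K) :
  e != 0 -> qc x y e -> qc y x e^-1.
Proof. by rewrite /qc => he H; rewrite H scalerA mulVf // scale1r. Qed.

Lemma qc_inv (K : fieldType) (A : unitAlgType K) (x y : A) (e : K) :
  x \is a GRing.unit -> e != 0 -> qc x y e -> qc x^-1 y e^-1.
Proof.
move=> Ux he H; have H2 := qc_sym he H; rewrite /qc in H2 *.
rewrite -{1}(mulrK Ux y) H2 -scalerAl -scalerAr; congr (_ *: _).
by rewrite !mulrA mulVr ?mul1r.
Qed.

Lemma qc_pow (K : fieldType) (A : unitAlgType K) (x y : A) (e : K) (k : nat) :
  qc x y e -> qc (x ^+ k) y (e ^+ k).
Proof.
move=> H; elim: k => [|k IH]; first by rewrite /qc !expr0 mul1r mulr1 scale1r.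
rewrite /qc in H IH *.
by rewrite !exprSr -mulrA H -scalerAr [x ^+ k * (y * x)]mulrA IH -scalerAl scalerA mulrC [y * (_ * _)]mulrA.
Qed.

Lemma qc_powz (K : fieldType) (A : unitAlgType K) (x y : A) (e : K) (m : int) :
  x \is a GRing.unit -> e != 0 -> qc x y e -> qc (x ^ m) y (e ^ m).
Proof.
move=> Ux he H; case: m => k; first exact: qc_pow.
apply: qc_inv; [exact: unitrX | exact: expf_neq0 | exact: qc_pow].
Qed.

Lemma qc_powz_r (K : fieldType) (A : unitAlgType K) (x y : A) (e : K) (m : int) :
  y \is a GRing.unit -> e != 0 -> qc x y e -> qc x (y ^ m) (e ^ m).
Proof.
move=> Uy he H.
have he' : e^-1 != 0 by rewrite invr_eq0.
have := qc_sym (expfz_neq0 m he') (qc_powz m Uy he' (qc_sym he H)).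
by rewrite expfV invrK.
Qed.

Lemma qcZ (K : fieldType) (A : unitAlgType K) (n : nat) (w : K) (Z : 'I_n -> A)
  (s : 'I_n -> 'I_n -> int) : w != 0 -> (forall i, Z i \is a GRing.unit) ->
  (forall i j, Z i * Z j = w ^ (2 * s i j) *: (Z j * Z i)) ->
  forall i j a b, qc (Z i ^ a) (Z j ^ b) (w ^ (2 * s i j * a * b)).
Proof.
move=> hw hU hZ i j a b.
have h1 := qc_powz a (hU i) (expfz_neq0 _ hw) (hZ i j).
rewrite exprz_exp in h1.
have := qc_powz_r b (hU j) (expfz_neq0 _ hw) h1.
by rewrite !exprz_exp.
Qed.

Lemma qc_prodZ (K : fieldType) (A : unitAlgType K) (n : nat) (w : K) (Z : 'I_n -> A)
  (s : 'I_n -> 'I_n -> int) : w != 0 -> (forall i, Z i \is a GRing.unit) ->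
  (forall i j, Z i * Z j = w ^ (2 * s i j) *: (Z j * Z i)) ->
  forall j b (a : 'I_n -> int) (r : seq 'I_n),
  qc (Z j ^ b) (\prod_(i <- r) Z i ^ a i) (w ^ (\sum_(i <- r) 2 * s j i * b * a i)).
Proof.
move=> hw hU hZ j b a; elim=> [|i r IH].
  by rewrite /qc !big_nil mulr1 mul1r expr0z scale1r.
rewrite !big_cons expfzDr //; exact: qc_mulr (qcZ hw hU hZ j i b (a i)) IH.
Qed.

Lemma sum_all_cond (n : nat) (x : 'I_n) (g : 'I_n -> int) (r : seq 'I_n) :
  all (fun v : 'I_n => (x < v)%N) r ->
  \sum_(v <- r | (x < v)%N) g v = \sum_(v <- r) g v.
Proof.
elim: r => [|y r IH] /=; first by rewrite !big_nil.
by case/andP=> h1 h2; rewrite !big_cons h1 IH.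
Qed.

Lemma sum_pairs_cons (n : nat) (x : 'I_n) (g : 'I_n -> 'I_n -> int) (r : seq 'I_n) :
  sorted (fun u v : 'I_n => (u < v)%N) (x :: r) ->
  \sum_(u <- x :: r) \sum_(v <- x :: r | (u < v)%N) g u v
  = \sum_(v <- r) g x v + \sum_(u <- r) \sum_(v <- r | (u < v)%N) g u v.
Proof.
move=> /= hp.
have hall : all (fun v : 'I_n => (x < v)%N) r.
  by apply: (order_path_min _ hp) => a b c; apply: ltn_trans.
rewrite big_cons big_cons ltnn sum_all_cond //; congr (_ + _).
rewrite [LHS]big_seq [RHS]big_seq; apply: eq_bigr => u hu.
rewrite big_cons; have := allP hall u hu => hxu.
by rewrite ltnNge (ltnW hxu).
Qed.

Lemma prod_list (K : fieldType) (A : unitAlgType K) (n : nat) (w : K) (Z : 'I_n -> A)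
  (s : 'I_n -> 'I_n -> int) : w != 0 -> (forall i, Z i \is a GRing.unit) ->
  (forall i j, Z i * Z j = w ^ (2 * s i j) *: (Z j * Z i)) ->
  forall (a b c : 'I_n -> int), (forall i, c i = a i + b i) ->
  forall r : seq 'I_n, sorted (fun u v : 'I_n => (u < v)%N) r ->
  (\prod_(i <- r) Z i ^ a i) * (\prod_(i <- r) Z i ^ b i)
  = w ^ (- \sum_(u <- r) \sum_(v <- r | (u < v)%N) 2 * s u v * b u * a v)
    *: \prod_(i <- r) Z i ^ c i.
Proof.
move=> hw hU hZ a b c hc; elim=> [|x r IH] hs.
  by rewrite !big_nil mulr1 expr0z scale1r.
rewrite sum_pairs_cons // !big_cons.
have hq := qc_prodZ hw hU hZ x (b x) a r; rewrite /qc in hq.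
set Pa := \prod_(i <- r) Z i ^ a i in hq *.
set Pb := \prod_(i <- r) Z i ^ b i.
set e := w ^ _ in hq.
have he : e != 0 by rewrite expfz_neq0.
have hq' : Pa * Z x ^ b x = e^-1 *: (Z x ^ b x * Pa).
  by rewrite hq scalerA mulVf // scale1r.
rewrite -mulrA [Pa * _]mulrA hq' -scalerAl -scalerAr !mulrA -exprzDr // -hc -mulrA /Pa /Pb.
rewrite IH; last by move: hs => /= /path_sorted.
rewrite -scalerAr scalerA; congr (_ *: _).
by rewrite opprD expfzDr // /e invr_expz.
Qed.


Lemma sorted_index_enum (n : nat) :
  sorted (fun u v : 'I_n => (u < v)%N) (index_enum 'I_n).
Proof.
have -> : index_enum 'I_n = enum 'I_n.
  by rewrite -deprecated_filter_index_enum filter_predT.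
by have := iota_ltn_sorted 0 n; rewrite -val_enum_ord sorted_map.
Qed.

Lemma sum_pairs_split (n : nat) (G : 'I_n -> 'I_n -> int) : (forall u, G u u = 0) ->
  \sum_(u : 'I_n) \sum_(v : 'I_n) G u v = \sum_(u : 'I_n) \sum_(v : 'I_n | (u < v)%N) (G u v + G v u).
Proof.
move=> h0.
transitivity (\sum_(u : 'I_n) \sum_(v : 'I_n) ((if (u < v)%N then G u v else 0)
                              + (if (v < u)%N then G u v else 0))).
  apply: eq_bigr => u _; apply: eq_bigr => v _.
  case: (ltngtP u v) => h; rewrite ?addr0 ?add0r //.
  have e : u = v by apply: val_inj.
  by subst; rewrite h0.
under eq_bigr => u _ do rewrite big_split /=.
rewrite big_split /= [X in _ + X]exchange_big /=.
rewrite -big_split /=; apply: eq_bigr => u _.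
rewrite -big_split /= [RHS]big_mkcond /=; apply: eq_bigr => v _.
by case: ifP => _; rewrite ?addr0.
Qed.

Lemma weyl_gen (K : fieldType) (A : unitAlgType K) (n : nat) (w : K) (Z : 'I_n -> A)
  (s : 'I_n -> 'I_n -> int) : w != 0 -> (forall i, Z i \is a GRing.unit) ->
  (forall i j, Z i * Z j = w ^ (2 * s i j) *: (Z j * Z i)) ->
  (forall u v, s v u = - s u v) ->
  forall (a b c : 'I_n -> int), (forall i, c i = a i + b i) ->
  (w ^ (- \sum_(u < n) \sum_(v < n | (u < v)%N) a u * a v * s u v)
     *: \prod_(i < n) Z i ^ a i) *
  (w ^ (- \sum_(u < n) \sum_(v < n | (u < v)%N) b u * b v * s u v)
     *: \prod_(i < n) Z i ^ b i)
  = w ^ (\sum_(u < n) \sum_(v < n) a u * b v * s u v) *: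
    (w ^ (- \sum_(u < n) \sum_(v < n | (u < v)%N) c u * c v * s u v)
     *: \prod_(i < n) Z i ^ c i).
Proof.
move=> hw hU hZ hanti a b c hc.
rewrite -scalerAl -scalerAr scalerA.
rewrite (prod_list hw hU hZ hc (sorted_index_enum n)) !scalerA; congr (_ *: _).
rewrite -!expfzDr //; congr (w ^ _).
rewrite (sum_pairs_split (G := fun u v => a u * b v * s u v)); last first.
  by move=> u; have := hanti u u; lia.
have -> : \sum_(u < n) \sum_(v < n | (u < v)%N) c u * c v * s u v =
  \sum_(u < n) \sum_(v < n | (u < v)%N) (a u * a v * s u v + b u * b v * s u v
     + 2 * s u v * b u * a v + (a u * b v * s u v + a v * b u * s v u)).
  apply: eq_bigr => u _; apply: eq_bigr => v _; rewrite !hc hanti; ring.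
have hsplit : forall F G : 'I_n -> 'I_n -> int,
  \sum_(u < n) \sum_(v < n | (u < v)%N) (F u v + G u v) =
  \sum_(u < n) \sum_(v < n | (u < v)%N) F u v + \sum_(u < n) \sum_(v < n | (u < v)%N) G u v.
  by move=> F G; rewrite -big_split; apply: eq_bigr => u _; rewrite big_split.
rewrite (hsplit (fun u v => a u * a v * s u v + b u * b v * s u v + 2 * s u v * b u * a v)).
rewrite (hsplit (fun u v => a u * a v * s u v + b u * b v * s u v)).
rewrite (hsplit (fun u v => a u * a v * s u v)) /=.
ring.
Qed.
Definition o0 : 'I_3 := @Ordinal 3 0 isT.
Definition o1 : 'I_3 := @Ordinal 3 1 isT.
Definition o2 : 'I_3 := @Ordinal 3 2 isT.
Lemma oS0 : ordS o0 = o1. Proof. by apply/val_inj. Qed.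
Lemma oS1 : ordS o1 = o2. Proof. by apply/val_inj. Qed.
Lemma oS2 : ordS o2 = o0. Proof. by apply/val_inj. Qed.
Lemma oP0 : ord_pred o0 = o2. Proof. by apply/val_inj. Qed.
Lemma oP1 : ord_pred o1 = o0. Proof. by apply/val_inj. Qed.
Lemma oP2 : ord_pred o2 = o1. Proof. by apply/val_inj. Qed.

Lemma sum3 (h : 'I_3 -> int) : \sum_(k < 3) h k = h o0 + h o1 + h o2.
Proof.
rewrite !big_ord_recr big_ord0 /= add0r; congr (h _ + h _ + h _); exact/val_inj.
Qed.

Lemma sum_fs (F : finType) (H : face_side F -> int) :
  \sum_(p : face_side F) H p = \sum_(f : F) \sum_(k < 3) H (f, k).
Proof. by rewrite pair_big; apply: eq_bigr => -[]. Qed.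

Lemma count2 (T : finType) (n : nat) (g : 'I_n -> 'I_n -> int) (s1 s2 : T -> 'I_n) :
  \sum_(u < n) \sum_(v < n) g u v * (#|[set p | (s1 p == u) && (s2 p == v)]|)%:Z
  = \sum_(p : T) g (s1 p) (s2 p).
Proof.
transitivity (\sum_(u < n) \sum_(v < n) \sum_(p : T)
                 (if (s1 p == u) && (s2 p == v) then g u v else 0)).
  apply: eq_bigr => u _; apply: eq_bigr => v _.
  rewrite -big_mkcond /=.
  have -> : \sum_(p | (s1 p == u) && (s2 p == v)) g u v
          = \sum_(p in [set p | (s1 p == u) && (s2 p == v)]) g u v.
    by apply: eq_bigl => p; rewrite inE.
  by rewrite sumr_const -mulr_natr natz.
under eq_bigr => u _ do rewrite exchange_big /=.
rewrite exchange_big /=; apply: eq_bigr => p _.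
rewrite (bigD1 (s1 p)) //= (bigD1 (s2 p)) //= !eqxx /=.
rewrite big1 => [|v /negbTE hv]; last by rewrite eq_sym hv.
rewrite addr0 big1 ?addr0 // => u /negbTE hu.
by apply: big1 => v _; rewrite eq_sym hu.
Qed.

Lemma count1 (T : finType) (n : nat) (g : 'I_n -> int) (s1 : T -> 'I_n) :
  \sum_(u < n) g u * (#|[set p | s1 p == u]|)%:Z = \sum_(p : T) g (s1 p).
Proof.
transitivity (\sum_(u < n) \sum_(p : T) (if s1 p == u then g u else 0)).
  apply: eq_bigr => u _.
  rewrite -big_mkcond /=.
  have -> : \sum_(p | s1 p == u) g u = \sum_(p in [set p | s1 p == u]) g u.
    by apply: eq_bigl => p; rewrite inE.
  by rewrite sumr_const -mulr_natr natz.
rewrite exchange_big /=; apply: eq_bigr => p _.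
rewrite (bigD1 (s1 p)) //= eqxx.
rewrite big1 ?addr0 // => u /negbTE hu.
by rewrite eq_sym hu.
Qed.

Lemma ec_side (n : nat) (F : finType) (side : F -> 'I_3 -> 'I_n) (al : F -> 'I_3 -> int) :
  is_edge_weight side al -> forall f k,
  edge_coord side al (side f k) = side_weight al f k.
Proof.
move=> hal f k; rewrite /edge_coord; case: pickP => [p /eqP hp | h].
  exact: hal hp.
by have := h (f, k); rewrite /= eqxx.
Qed.

Lemma ec_add (n : nat) (F : finType) (side : F -> 'I_3 -> 'I_n) (al be : F -> 'I_3 -> int) i :
  edge_coord side (add_weight al be) i = edge_coord side al i + edge_coord side be i.
Proof.
rewrite /edge_coord; case: pickP => [p _ | _]; last by rewrite addr0.
by rewrite /side_weight /add_weight; ring.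
Qed.

Lemma S_eq_T (n : nat) (F : finType) (side : F -> 'I_3 -> 'I_n) (al be : F -> 'I_3 -> int) :
  is_edge_weight side al -> is_edge_weight side be ->
  \sum_(u < n) \sum_(v < n) edge_coord side al u * edge_coord side be v * sigma side u v
  = thurston2 al be.
Proof.
move=> hal hbe.
set A := edge_coord side al; set B := edge_coord side be.
transitivity (\sum_(u < n) \sum_(v < n) (A u * B v) * (a_coef side u v)%:Z
            - \sum_(u < n) \sum_(v < n) (A u * B v) * (a_coef side v u)%:Z).
  rewrite -sumrB; apply: eq_bigr => u _; rewrite -sumrB; apply: eq_bigr => v _.
  by rewrite /sigma mulrBr.
rewrite /a_coef (count2 (fun u v => A u * B v) (fun p => side p.1 (ordS p.2))
                        (fun p => side p.1 p.2)).
rewrite [X in _ - X]exchange_big /=.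
rewrite (count2 (fun v u => A u * B v) (fun p => side p.1 (ordS p.2))
                        (fun p => side p.1 p.2)).
rewrite -sumrB /thurston2 !sum_fs; apply: eq_bigr => f _.
rewrite !sum3 /= /A /B !ec_side // /side_weight !(oS0, oS1, oS2) !(oP0, oP1, oP2).
ring.
Qed.

Lemma T_even (n : nat) (F : finType) (side : F -> 'I_3 -> 'I_n) (al be : F -> 'I_3 -> int) :
  ideal_triangulation side ->
  is_edge_weight side al -> is_edge_weight side be ->
  thurston2 al be = 2 * (\sum_(p : face_side F) (al p.1 p.2 * be p.1 p.2
                                      + al p.1 (ordS p.2) * be p.1 p.2)
          - \sum_(i < n) edge_coord side al i * edge_coord side be i).
Proof.
move=> [hcard _ _] hal hbe.
set A := edge_coord side al; set B := edge_coord side be.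
have hQ : \sum_(i < n) A i * B i * 2
          = \sum_(p : face_side F) A (side p.1 p.2) * B (side p.1 p.2).
  rewrite -(count1 (fun i => A i * B i) (fun p => side p.1 p.2)).
  by apply: eq_bigr => i _; rewrite hcard.
have h : thurston2 al be + \sum_(p : face_side F) A (side p.1 p.2) * B (side p.1 p.2)
   = 2 * \sum_(p : face_side F) (al p.1 p.2 * be p.1 p.2
                                      + al p.1 (ordS p.2) * be p.1 p.2).
  rewrite /thurston2 !sum_fs mulr_sumr -big_split /=; apply: eq_bigr => f _.
  rewrite !sum3 /= /A /B !ec_side // /side_weight !(oS0, oS1, oS2) !(oP0, oP1, oP2).
  ring.
rewrite mulrBr -h -hQ mulr_sumr.
have -> : \sum_(i < n) 2 * (A i * B i) = \sum_(i < n) A i * B i * 2.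
  by apply: eq_bigr => i _; rewrite mulrC.
ring.
Qed.

Lemma thurston_half (n : nat) (F : finType) (side : F -> 'I_3 -> 'I_n) (al be : F -> 'I_3 -> int) :
  ideal_triangulation side ->
  is_edge_weight side al -> is_edge_weight side be ->
  2 * thurston al be = thurston2 al be.
Proof.
move=> ht hal hbe.
by rewrite /thurston (T_even ht hal hbe) mulKz.
Qed.

Unset Implicit Arguments. Set Strict Implicit.

Theorem lemma3p2 (n : nat) (F : finType) (side : F -> 'I_3 -> 'I_n)
  (R : realType) (omega : R[i]) (A : unitAlgType R[i]) (Z : 'I_n -> A) :
  ideal_triangulation side ->
  omega != 0 ->
  quantum_torus_rel side omega Z ->
  forall alpha beta : F -> 'I_3 -> int,
    is_edge_weight side alpha -> is_edge_weight side beta ->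
    Zw side omega Z alpha * Zw side omega Z beta
      = omega ^ (2 * thurston alpha beta) *: Zw side omega Z (add_weight alpha beta)
    /\
    Zw side omega Z alpha * Zw side omega Z beta
      = omega ^ (4 * thurston alpha beta) *: (Zw side omega Z beta * Zw side omega Z alpha).
Proof.
move=> ht hw [hU hZ] al be hal hbe.
set a := edge_coord side al; set b := edge_coord side be.
set c := edge_coord side (add_weight al be).
have hc : forall i, c i = a i + b i by move=> i; rewrite /c ec_add.
have hc' : forall i, c i = b i + a i by move=> i; rewrite hc addrC.
have hanti : forall u v, sigma side v u = - sigma side u v.
  by move=> u v; rewrite /sigma opprB.
have key := weyl_gen hw hU hZ hanti hc.
have key' := weyl_gen hw hU hZ hanti hc'.
have hS : \sum_(u < n) \sum_(v < n) a u * b v * sigma side u v = 2 * thurston al be.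
  by rewrite (thurston_half ht hal hbe) S_eq_T.
have hS' : \sum_(u < n) \sum_(v < n) b u * a v * sigma side u v
         = - \sum_(u < n) \sum_(v < n) a u * b v * sigma side u v.
  rewrite exchange_big -sumrN; apply: eq_bigr => u _; rewrite -sumrN.
  by apply: eq_bigr => v _; rewrite hanti; ring.
rewrite /Zw /weyl -/a -/b -/c; split; first by rewrite key hS.
rewrite key key' hS' hS !scalerA; set t := thurston al be; set W := \sum_(u < n) _.
rewrite -!expfzDr //; congr (omega ^ _ *: _); rewrite addrA; congr (_ + _); lia.
Qed.
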